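(* Let $\mathfrak L_1,\dots,\mathfrak L_n,\mathfrak L$ be complete lattices and $(\mathcal F_\alpha)_{\alpha\in\mathcal O}$ with $\mathcal F_\alpha:\mathfrak L_1\times\dots\times\mathfrak L_n\to(\mathfrak L\to^+\mathfrak L)$ a family which is $\liminf$-pullable in all arguments. Then (1) for every $\beta\in\mathcal O$, the family $\vec{\mathcal G}\mapsto\mu^\beta(\mathcal F_\alpha(\vec{\mathcal G}))$ $(\alpha\in\mathcal O)$ is $\liminf$-pullable; (2) for every monotone $f:\mathfrak L\to\mathfrak L$, every $\phi:\mathcal O\to\mathcal O$ and every nonzero limit ordinal $\lambda\in\mathcal O$, writing $\mu^\alpha$ for $\mu^\alpha f$: $\mu^{\liminf_\lambda\phi}=\liminf_{\alpha\to\lambda}\mu^{\phi(\alpha)}$.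
   Context: $\mathcal O$ is the set of ordinals $\le\top_{\mathsf{ord}}$ for a fixed ordinal $\top_{\mathsf{ord}}$ ($=\beth_\omega$). For $g:\mathcal O\to\mathfrak L$ into a complete lattice and a nonzero limit $\lambda$: $\liminf_\lambda g=\liminf_{\alpha\to\lambda}g(\alpha)=\sup_{\alpha_0<\lambda}\inf_{\alpha_0\le\alpha<\lambda}g(\alpha)$, $\limsup_{\alpha\to\lambda}g(\alpha)=\inf_{\alpha_0<\lambda}\sup_{\alpha_0\le\alpha<\lambda}g(\alpha)$; on products, componentwise. $\mathfrak L\to^+\mathfrak L$ = monotone maps. For $f:\mathfrak L\to\mathfrak L$, $g\in\mathfrak L$: $f^0(g)=g$, $f^{\alpha+1}(g)=f(f^\alpha(g))$, $f^\lambda(g)=\limsup_{\alpha\to\lambda}f^\alpha(g)$; $\mu^\alpha f:=f^\alpha(\bot)$. A family $(\mathcal F_\alpha)_{\alpha\in\mathcal O}$ of maps $\mathfrak K\to\mathfrak K'$ is $\liminf$-pullable if for all $\mathcal G:\mathcal O\to\mathfrak K$ and nonzero limits $\lambda$: $\mathcal F_\gamma(\liminf_{\alpha\to\lambda}\mathcal G_\alpha)\sqsubseteq\liminf_{\alpha\to\lambda}\mathcal F_\gamma(\mathcal G_\alpha)$ for all $\gamma\in\mathcal O$, and $\mathcal F_\lambda(\liminf_{\alpha\to\lambda}\mathcal G_\alpha)\sqsubseteq\liminf_{\alpha\to\lambda}\mathcal F_\alpha(\mathcal G_\alpha)$. ''$\liminf$-pullable in all arguments'' means the family $(\vec{\mathcal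 G},\mathcal X)\mapsto\mathcal F_\alpha(\vec{\mathcal G})(\mathcal X)$ is $\liminf$-pullable. *)

(* Defs.v *)
From Stdlib Require Import Classical ClassicalEpsilon.

Set Implicit Arguments.

Record CompleteLattice := {
  carrier :> Type;
  le : carrier -> carrier -> Prop;
  le_refl : forall x, le x x;
  le_trans : forall x y z, le x y -> le y z -> le x z;
  le_antisym : forall x y, le x y -> le y x -> x = y;
  sup : (carrier -> Prop) -> carrier;
  sup_ub : forall (S : carrier -> Prop) x, S x -> le x (sup S);
  sup_least : forall (S : carrier -> Prop) y,
      (forall x, S x -> le x y) -> le (sup S) y
}.

Arguments le {c} _ _.
Arguments sup {c} _.

Definition inf {L : CompleteLattice} (S : L -> Prop) : L :=
  sup (fun y => forall x, S x -> le y x).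

Definition bot {L : CompleteLattice} : L := sup (fun _ => False).

Definition monotone {L : CompleteLattice} (f : L -> L) : Prop :=
  forall x y, le x y -> le (f x) (f y).

Section Prod.
Variables A B : CompleteLattice.

Definition prod_le (x y : A * B) : Prop := le (fst x) (fst y) /\ le (snd x) (snd y).
Definition prod_sup (S : A * B -> Prop) : A * B :=
  (sup (fun a => exists b, S (a, b)), sup (fun b => exists a, S (a, b))).

Lemma prod_le_refl x : prod_le x x.
Proof. split; apply le_refl. Qed.
Lemma prod_le_trans x y z : prod_le x y -> prod_le y z -> prod_le x z.
Proof. intros [H1 H2] [H3 H4]; split; eapply le_trans; eauto. Qed.
Lemma prod_le_antisym x y : prod_le x y -> prod_le y x -> x = y.
Proof.
  destruct x as [x1 x2], y as [y1 y2]; intros [H1 H2] [H3 H4]; simpl in *.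
  f_equal; apply le_antisym; auto.
Qed.
Lemma prod_sup_ub (S : A * B -> Prop) x : S x -> prod_le x (prod_sup S).
Proof.
  destruct x as [x1 x2]; intros H; split; simpl; apply sup_ub; eauto.
Qed.
Lemma prod_sup_least (S : A * B -> Prop) y :
  (forall x, S x -> prod_le x y) -> prod_le (prod_sup S) y.
Proof.
  intros H; split; simpl; apply sup_least.
  - intros a [b Hb]; exact (proj1 (H _ Hb)).
  - intros b [a Ha]; exact (proj2 (H _ Ha)).
Qed.

Definition prodCL : CompleteLattice :=
  {| carrier := A * B; le := prod_le; le_refl := prod_le_refl;
     le_trans := prod_le_trans; le_antisym := prod_le_antisym;
     sup := prod_sup; sup_ub := prod_sup_ub; sup_least := prod_sup_least |}.
End Prod.

Record OrdSet := {
  ord :> Type;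
  olt : ord -> ord -> Prop;
  olt_irrefl : forall a, ~ olt a a;
  olt_trans : forall a b c, olt a b -> olt b c -> olt a c;
  olt_total : forall a b, olt a b \/ a = b \/ olt b a;
  olt_wf : well_founded olt;
  otop : ord;
  otop_max : forall a, olt a otop \/ a = otop
}.

Arguments olt {o} _ _.

Section Ordinals.
Variable O : OrdSet.

Definition ole (a b : O) : Prop := olt a b \/ a = b.

Definition is_limit (l : O) : Prop :=
  (exists b, olt b l) /\ (forall b, olt b l -> exists c, olt b c /\ olt c l).

Definition liminf {L : CompleteLattice} (g : O -> L) (l : O) : L :=
  sup (fun x => exists a0, olt a0 l /\
         x = inf (fun y => exists a, ole a0 a /\ olt a l /\ y = g a)).

Definition limsup {L : CompleteLattice} (g : O -> L) (l : O) : L :=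
  inf (fun x => exists a0, olt a0 l /\
         x = sup (fun y => exists a, ole a0 a /\ olt a l /\ y = g a)).

Definition o_is_lub (S : O -> Prop) (u : O) : Prop :=
  (forall x, S x -> ole x u) /\ (forall v, (forall x, S x -> ole x v) -> ole u v).
Definition o_is_glb (S : O -> Prop) (u : O) : Prop :=
  (forall x, S x -> ole u x) /\ (forall v, (forall x, S x -> ole v x) -> ole v u).

Definition osup (S : O -> Prop) : O := epsilon (inhabits (otop O)) (o_is_lub S).
Definition oinf (S : O -> Prop) : O := epsilon (inhabits (otop O)) (o_is_glb S).

Definition oliminf (phi : O -> O) (l : O) : O :=
  osup (fun x => exists a0, olt a0 l /\
         x = oinf (fun y => exists a, ole a0 a /\ olt a l /\ y = phi a)).

(** * Transfinite iteration f^a(g):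
      f^0 g = g, f^(b+1) g = f (f^b g), f^l g = limsup_{b -> l} f^b g *)
Section Iter.
Variables (L : CompleteLattice) (f : L -> L) (g : L).

Definition iter_step (a : O) (rec : forall b : O, olt b a -> L) : L :=
  match excluded_middle_informative
          (exists b, olt b a /\ forall c, ~ (olt b c /\ olt c a)) with
  | left H =>
      let (b, Hb) := constructive_indefinite_description _ H in
      f (rec b (proj1 Hb))
  | right _ =>
      match excluded_middle_informative (exists b, olt b a) with
      | left _ =>
          inf (fun x => exists a0, olt a0 a /\
                 x = sup (fun y => exists b (Hb : olt b a),
                            ole a0 b /\ y = rec b Hb))
      | right _ => g
      end
  end.

Definition iter (a : O) : L := Fix (olt_wf O) (fun _ => carrier L) iter_step a.
End Iter.

Definition mu (a : O) {L : CompleteLattice} (f : L -> L) : L := @iter L f bot a.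

Definition liminf_pullable {K K' : CompleteLattice} (F : O -> K -> K') : Prop :=
  forall (G : O -> K) (l : O), is_limit l ->
    (forall c : O, le (F c (liminf G l)) (liminf (fun a => F c (G a)) l)) /\
    le (F l (liminf G l)) (liminf (fun a => F a (G a)) l).

End Ordinals.

Arguments ole {O} _ _.
Arguments is_limit {O} _.
Arguments liminf {O L} _ _.
Arguments limsup {O L} _ _.
Arguments osup {O} _.
Arguments oinf {O} _.
Arguments oliminf {O} _ _.
Arguments iter {O L} _ _ _.
Arguments mu {O} _ {L} _.
Arguments liminf_pullable {O K K'} _.

(* Main.v *)
Require Import Defs.
From Stdlib Require Import Classical ClassicalEpsilon FunctionalExtensionality PropExtensionality.

Lemma inf_lb (L : CompleteLattice) (S : L -> Prop) x : S x -> le (inf S) x.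
Proof. intros H. unfold inf. apply sup_least. intros y Hy. apply Hy, H. Qed.

Lemma inf_glb (L : CompleteLattice) (S : L -> Prop) y :
  (forall x, S x -> le y x) -> le y (inf S).
Proof. intros H. unfold inf. apply (sup_ub _ (fun y => forall x, S x -> le y x)). exact H. Qed.

Lemma bot_least (L : CompleteLattice) (x : L) : le bot x.
Proof. unfold bot. apply sup_least. intros y []. Qed.

Lemma sup_ext (L : CompleteLattice) (S S' : L -> Prop) :
  (forall x, S x <-> S' x) -> sup S = sup S'.
Proof.
  intros H. apply le_antisym; apply sup_least; intros x Hx; apply sup_ub.
  - exact (proj1 (H x) Hx).
  - exact (proj2 (H x) Hx).
Qed.

Lemma inf_ext (L : CompleteLattice) (S S' : L -> Prop) :
  (forall x, S x <-> S' x) -> inf S = inf S'.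
Proof.
  intros H. unfold inf. apply sup_ext. intros y; split; intros Hy x Hx.
  - apply Hy, (proj2 (H x)), Hx.
  - apply Hy, (proj1 (H x)), Hx.
Qed.

Lemma ole_refl (O : OrdSet) (a : O) : ole a a.
Proof. right; reflexivity. Qed.

Lemma ole_trans (O : OrdSet) (a b c : O) : ole a b -> ole b c -> ole a c.
Proof.
  unfold ole; intros [H|H] [H'|H']; subst; auto.
  left; eapply olt_trans; eauto.
Qed.

Lemma ole_antisym (O : OrdSet) (a b : O) : ole a b -> ole b a -> a = b.
Proof.
  unfold ole; intros [H|H] [H'|H']; subst; auto.
  exfalso; apply (olt_irrefl _ a); eapply olt_trans; eauto.
Qed.

Lemma ole_or_lt (O : OrdSet) (a b : O) : ole a b \/ olt b a.
Proof.
  destruct (olt_total _ a b) as [H|[H|H]]; [left;left|left;right|right]; auto.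
Qed.

Lemma o_min (O : OrdSet) (S : O -> Prop) x :
  S x -> exists y, S y /\ forall z, S z -> ole y z.
Proof.
  intros Hx. apply NNPP; intros Hn.
  assert (Hall : forall a, ~ S a).
  { intro a. induction a as [a IH] using (well_founded_ind (olt_wf O)).
    intros Ha. apply Hn. exists a. split; auto. intros z Hz.
    destruct (ole_or_lt _ a z) as [H|H]; auto.
    exfalso; exact (IH z H Hz). }
  exact (Hall x Hx).
Qed.

Lemma oinf_min (O : OrdSet) (S : O -> Prop) y :
  S y -> (forall z, S z -> ole y z) -> oinf S = y.
Proof.
  intros Hy Hmin.
  assert (Hg : o_is_glb O S (oinf S)).
  { unfold oinf. apply epsilon_spec. exists y. split; auto. }
  destruct Hg as [H1 H2].
  apply ole_antisym; auto.
Qed.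

Lemma osup_spec (O : OrdSet) (S : O -> Prop) : o_is_lub O S (osup S).
Proof.
  unfold osup. apply epsilon_spec.
  destruct (o_min _ (fun u => forall x, S x -> ole x u) (otop O)) as [u [Hu Hmin]].
  { intros x _. destruct (otop_max _ x) as [H|H]; [left|right]; auto. }
  exists u. split; auto.
Qed.

Definition is_pred (O : OrdSet) (p a : O) := olt p a /\ forall c, ~ (olt p c /\ olt c a).

Lemma pred_unique (O : OrdSet) (p p' a : O) : is_pred O p a -> is_pred O p' a -> p = p'.
Proof.
  intros [H1 H2] [H1' H2'].
  destruct (olt_total _ p p') as [H|[H|H]]; auto.
  - exfalso; apply (H2 p'); auto.
  - exfalso; apply (H2' p); auto.
Qed.

Lemma classify (O : OrdSet) (a : O) :
  (exists p, is_pred O p a) \/ ((forall p, ~ is_pred O p a) /\ exists b, olt b a)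
  \/ (forall b, ~ olt b a).
Proof.
  destruct (classic (exists p, is_pred O p a)) as [H|H]; auto.
  destruct (classic (exists b, olt b a)) as [H'|H']; right; [left|right].
  - split; auto. intros p Hp; apply H; eauto.
  - intros b Hb; apply H'; eauto.
Qed.

Lemma iter_unfold (O : OrdSet) (L : CompleteLattice) (f : L -> L) (g : L) (a : O) :
  iter f g a = iter_step O L f g a (fun b _ => iter f g b).
Proof.
  unfold iter. rewrite Fix_eq; [reflexivity|]. intros x f0 g0 H.
  assert (E : f0 = g0).
  { apply functional_extensionality_dep; intro y.
    apply functional_extensionality_dep; intro p. apply H. }
  subst; reflexivity.
Qed.

Lemma iter_succ (O : OrdSet) (L : CompleteLattice) (f : L -> L) (g : L) (p a : O) :
  is_pred O p a -> iter f g a = f (iter f g p).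
Proof.
  intros Hp. rewrite iter_unfold. unfold iter_step.
  destruct (excluded_middle_informative _) as [H|H].
  - destruct (constructive_indefinite_description _ H) as [b Hb].
    replace b with p; [reflexivity|].
    apply (pred_unique O p b a); auto.
  - exfalso; apply H; exists p; exact Hp.
Qed.

Lemma iter_lim (O : OrdSet) (L : CompleteLattice) (f : L -> L) (g : L) (a : O) :
  (forall p, ~ is_pred O p a) -> (exists b, olt b a) ->
  iter f g a = inf (fun x => exists a0, olt a0 a /\
     x = sup (fun y => exists b, olt b a /\ ole a0 b /\ y = iter f g b)).
Proof.
  intros Hnp Hex. rewrite iter_unfold. unfold iter_step.
  destruct (excluded_middle_informative _) as [H|H].
  - exfalso. destruct H as [p Hp]. apply (Hnp p); exact Hp.
  - destruct (excluded_middle_informative _) as [H'|H']; [|contradiction].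
    apply inf_ext. intros x; split; intros [a0 [Ha0 E]]; exists a0; split; auto;
      rewrite E; apply sup_ext; intros y; split.
    + intros [b [Hb [H1 H2]]]; eauto.
    + intros [b [Hb [H1 H2]]]; eauto.
    + intros [b [Hb [H1 H2]]]; eauto.
    + intros [b [Hb [H1 H2]]]; eauto.
Qed.

Lemma iter_zero (O : OrdSet) (L : CompleteLattice) (f : L -> L) (g : L) (a : O) :
  (forall b, ~ olt b a) -> iter f g a = g.
Proof.
  intros Hz. rewrite iter_unfold. unfold iter_step.
  destruct (excluded_middle_informative _) as [H|H].
  - exfalso. destruct H as [p [Hp _]]. apply (Hz p Hp).
  - destruct (excluded_middle_informative _) as [H'|H']; auto.
    exfalso. destruct H' as [b Hb]. apply (Hz b Hb).
Qed.

Lemma mu_lim_gen (O : OrdSet) (L : CompleteLattice) (h : L -> L) (b : O) :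
  (forall c, olt c b -> forall a, olt a c -> le (mu a h) (mu c h)) ->
  (forall p, ~ is_pred O p b) -> (exists b0, olt b0 b) ->
  mu b h = sup (fun y => exists c, olt c b /\ y = mu c h).
Proof.
  intros IH Hnp Hex. unfold mu at 1. rewrite iter_lim; auto.
  apply le_antisym.
  - destruct Hex as [b0 Hb0].
    eapply le_trans; [apply inf_lb; exists b0; split; [exact Hb0|reflexivity]|].
    apply sup_least. intros y [c [Hc [_ E]]]. apply sup_ub. exists c; split; auto.
  - apply inf_glb. intros x [a0 [Ha0 E]]. rewrite E.
    apply sup_least. intros y [c [Hc E']]. rewrite E'.
    destruct (ole_or_lt _ c a0) as [[H|H]|H].
    + eapply le_trans; [apply (IH a0 Ha0 c H)|].
      apply sup_ub. exists a0; split; auto. split; [apply ole_refl|reflexivity].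
    + subst. apply sup_ub. exists a0; split; auto. split; [apply ole_refl|reflexivity].
    + apply sup_ub. exists c; split; auto. split; [left; exact H|reflexivity].
Qed.

Lemma mu_chain (O : OrdSet) (L : CompleteLattice) (h : L -> L) : monotone h ->
  forall b : O, le (mu b h) (h (mu b h)) /\ forall a, olt a b -> le (mu a h) (mu b h).
Proof.
  intros Hm b. induction b as [b IH] using (well_founded_ind (olt_wf O)).
  destruct (classify O b) as [[p Hp]|[[Hnp Hex]|Hz]].
  - assert (E : mu b h = h (mu p h)) by (unfold mu; apply iter_succ; auto).
    destruct (IH p (proj1 Hp)) as [Hp1 Hp2]. rewrite E. split.
    + apply Hm. exact Hp1.
    + intros a Ha. destruct (olt_total _ a p) as [H|[H|H]].
      * eapply le_trans; [apply Hp2; exact H|exact Hp1].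
      * subst; exact Hp1.
      * exfalso; apply (proj2 Hp a); auto.
  - rewrite (mu_lim_gen O L h b); auto.
    2:{ intros c Hc. apply (proj2 (IH c Hc)). }
    split.
    + apply sup_least. intros y [c [Hc E]]. rewrite E.
      eapply le_trans; [apply (proj1 (IH c Hc))|]. apply Hm.
      apply sup_ub. exists c; auto.
    + intros a Ha. apply sup_ub. exists a; auto.
  - assert (E : mu b h = bot) by (unfold mu; apply iter_zero; auto).
    rewrite E. split; [apply bot_least|]. intros a Ha; exfalso; apply (Hz a Ha).
Qed.

Lemma mu_mono (O : OrdSet) (L : CompleteLattice) (h : L -> L) : monotone h ->
  forall a b : O, ole a b -> le (mu a h) (mu b h).
Proof.
  intros Hm a b [H|H].
  - apply (proj2 (mu_chain O L h Hm b)); auto.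
  - subst; apply le_refl.
Qed.

Lemma mu_lim (O : OrdSet) (L : CompleteLattice) (h : L -> L) (b : O) : monotone h ->
  (forall p, ~ is_pred O p b) -> (exists b0, olt b0 b) ->
  mu b h = sup (fun y => exists c, olt c b /\ y = mu c h).
Proof.
  intros Hm. apply mu_lim_gen. intros c _. apply (proj2 (mu_chain O L h Hm c)).
Qed.

Lemma liminf_mono (O : OrdSet) (L : CompleteLattice) (g1 g2 : O -> L) (l : O) :
  (forall a, le (g1 a) (g2 a)) -> le (liminf g1 l) (liminf g2 l).
Proof.
  intros H. unfold liminf. apply sup_least. intros x [a0 [Ha0 E]]. rewrite E.
  eapply le_trans; [|apply sup_ub; exists a0; split; [exact Ha0|reflexivity]].
  apply inf_glb. intros y [a [H1 [H2 E']]]. rewrite E'.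
  eapply le_trans; [apply inf_lb; exists a; split; [exact H1|split; [exact H2|reflexivity]]|].
  apply H.
Qed.

Lemma fst_inf (K L : CompleteLattice) (S : prodCL K L -> Prop) :
  fst (inf S) = inf (fun a : K => exists b : L, S (a, b)).
Proof.
  unfold inf at 1. simpl. unfold inf. apply sup_ext. intros a; split.
  - intros [b Hb] x [z Hz]. destruct (Hb (x,z) Hz) as [H1 H2]. exact H1.
  - intros Ha. exists bot. intros [x z] Hxz. split; simpl.
    + apply Ha; exists z; auto.
    + apply bot_least.
Qed.

Lemma snd_inf (K L : CompleteLattice) (S : prodCL K L -> Prop) :
  snd (inf S) = inf (fun b : L => exists a : K, S (a, b)).
Proof.
  unfold inf at 1. simpl. unfold inf. apply sup_ext. intros b; split.
  - intros [a Ha] z [x Hx]. destruct (Ha (x,z) Hx) as [H1 H2]. exact H2.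
  - intros Hb. exists bot. intros [x z] Hxz. split; simpl.
    + apply bot_least.
    + apply Hb; exists x; auto.
Qed.

Lemma liminf_fst (O : OrdSet) (K L : CompleteLattice) (H : O -> prodCL K L) (l : O) :
  fst (liminf H l) = liminf (fun a => fst (H a)) l.
Proof.
  assert (T : forall a0, fst (inf (fun y : prodCL K L => exists a, ole a0 a /\ olt a l /\ y = H a))
     = inf (fun y => exists a, ole a0 a /\ olt a l /\ y = fst (H a))).
  { intros a0. rewrite fst_inf. apply inf_ext. intros y; split.
    - intros [z [a [H1 [H2 H3]]]]. exists a; repeat split; auto.
      apply (f_equal fst) in H3; exact H3.
    - intros [a [H1 [H2 H3]]]. exists (snd (H a)). exists a; repeat split; auto.
      rewrite H3. destruct (H a); reflexivity. }
  unfold liminf at 1. simpl. unfold liminf. apply sup_ext. intros x; split.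
  - intros [b [a0 [Ha0 E]]]. exists a0; split; auto.
    apply (f_equal fst) in E. simpl in E. rewrite E. apply T.
  - intros [a0 [Ha0 E]].
    exists (snd (inf (fun y : prodCL K L => exists a, ole a0 a /\ olt a l /\ y = H a))).
    exists a0; split; auto. rewrite E, <- T. symmetry. apply surjective_pairing.
Qed.

Lemma liminf_snd (O : OrdSet) (K L : CompleteLattice) (H : O -> prodCL K L) (l : O) :
  snd (liminf H l) = liminf (fun a => snd (H a)) l.
Proof.
  assert (T : forall a0, snd (inf (fun y : prodCL K L => exists a, ole a0 a /\ olt a l /\ y = H a))
     = inf (fun y => exists a, ole a0 a /\ olt a l /\ y = snd (H a))).
  { intros a0. rewrite snd_inf. apply inf_ext. intros y; split.
    - intros [z [a [H1 [H2 H3]]]]. exists a; repeat split; auto.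
      apply (f_equal snd) in H3; exact H3.
    - intros [a [H1 [H2 H3]]]. exists (fst (H a)). exists a; repeat split; auto.
      rewrite H3. destruct (H a); reflexivity. }
  unfold liminf at 1. simpl. unfold liminf. apply sup_ext. intros x; split.
  - intros [b [a0 [Ha0 E]]]. exists a0; split; auto.
    apply (f_equal snd) in E. simpl in E. rewrite E. apply T.
  - intros [a0 [Ha0 E]].
    exists (fst (inf (fun y : prodCL K L => exists a, ole a0 a /\ olt a l /\ y = H a))).
    exists a0; split; auto. rewrite E, <- T. symmetry. apply surjective_pairing.
Qed.

Lemma liminf_ext (O : OrdSet) (L : CompleteLattice) (g1 g2 : O -> L) (l : O) :
  (forall a, g1 a = g2 a) -> liminf g1 l = liminf g2 l.
Proof. intros H. replace g2 with g1; auto. apply functional_extensionality; auto. Qed.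

Lemma part1 (O : OrdSet) (K L : CompleteLattice) (F : O -> K -> L -> L)
  (Fmono : forall (a : O) (G : K), monotone (F a G))
  (Fpull : liminf_pullable (K := prodCL K L) (K' := L)
             (fun (a : O) (GX : prodCL K L) => F a (fst GX) (snd GX))) :
  forall beta : O,
      liminf_pullable (K := K) (K' := L) (fun (a : O) (G : K) => mu beta (F a G)).
Proof.
  assert (PP : forall (G : O -> K) (X : O -> L) l, is_limit l ->
    (forall c, le (F c (liminf G l) (liminf X l)) (liminf (fun a => F c (G a) (X a)) l)) /\
    le (F l (liminf G l) (liminf X l)) (liminf (fun a => F a (G a) (X a)) l)).
  { intros G X l Hl.
    destruct (Fpull (fun a => (G a, X a) : prodCL K L) l Hl) as [H1 H2].
    cbv beta in H1, H2.
    rewrite liminf_fst, liminf_snd in H1, H2. exact (conj H1 H2). }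
  intro beta. induction beta as [beta IH] using (well_founded_ind (olt_wf O)).
  intros G l Hl. cbv beta.
  destruct (classify O beta) as [[p Hp]|[[Hnp Hex]|Hz]].
  - assert (E : forall h : L -> L, mu beta h = h (mu p h))
      by (intro h; unfold mu; apply iter_succ; auto).
    destruct (IH p (proj1 Hp) G l Hl) as [IHa IHb]. cbv beta in IHa, IHb.
    split.
    + intro c. rewrite E.
      rewrite (liminf_ext O L _ (fun a => F c (G a) (mu p (F c (G a))))) by (intro; apply E).
      eapply le_trans; [apply Fmono; apply IHa|].
      apply (proj1 (PP G (fun a => mu p (F c (G a))) l Hl)).
    + rewrite E.
      rewrite (liminf_ext O L _ (fun a => F a (G a) (mu p (F a (G a))))) by (intro; apply E).
      eapply le_trans; [apply Fmono; apply IHb|].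
      apply (proj2 (PP G (fun a => mu p (F a (G a))) l Hl)).
  - split.
    + intro c. rewrite (mu_lim O L _ beta (Fmono _ _) Hnp Hex).
      apply sup_least. intros y [b [Hb E]]. rewrite E.
      eapply le_trans; [apply (proj1 (IH b Hb G l Hl) c)|].
      apply liminf_mono. intro a. apply mu_mono; [apply Fmono|left; exact Hb].
    + rewrite (mu_lim O L _ beta (Fmono _ _) Hnp Hex).
      apply sup_least. intros y [b [Hb E]]. rewrite E.
      eapply le_trans; [apply (proj2 (IH b Hb G l Hl))|].
      apply liminf_mono. intro a. apply mu_mono; [apply Fmono|left; exact Hb].
  - assert (E : forall h : L -> L, mu beta h = bot)
      by (intro h; unfold mu; apply iter_zero; auto).
    split; [intro c|]; rewrite E; apply bot_least.
Qed.

Lemma part2 (O : OrdSet) (L : CompleteLattice) (f : L -> L) : monotone f ->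
   forall (phi : O -> O) (l : O), is_limit l ->
     mu (oliminf phi l) f = liminf (fun a : O => mu (phi a) f) l.
Proof.
  intros Hm phi l [[a00 Ha00] Hlim].
  set (B := fun a0 => oinf (fun y => exists a, ole a0 a /\ olt a l /\ y = phi a)).
  assert (HB : forall a0, olt a0 l -> exists a, ole a0 a /\ olt a l /\ B a0 = phi a /\
     forall a', ole a0 a' -> olt a' l -> ole (B a0) (phi a')).
  { intros a0 Ha0.
    destruct (o_min O (fun y => exists a, ole a0 a /\ olt a l /\ y = phi a) (phi a0))
      as [y [[a [H1 [H2 H3]]] Hmin]].
    { exists a0; repeat split; auto. apply ole_refl. }
    assert (EB : B a0 = y) by (apply oinf_min; eauto).
    exists a; repeat split; auto. rewrite EB; auto.
    intros a' H1' H2'. rewrite EB. apply Hmin. eauto. }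
  transitivity (sup (fun x => exists a0, olt a0 l /\ x = mu (B a0) f)).
  2:{ unfold liminf. apply sup_ext. intros x; split; intros [a0 [Ha0 E]];
      exists a0; split; auto; rewrite E;
      destruct (HB a0 Ha0) as [a [H1 [H2 [H3 H4]]]].
      - apply le_antisym.
        + apply inf_glb. intros y [a' [H1' [H2' E']]]. rewrite E'.
          apply mu_mono; auto.
        + rewrite H3. apply inf_lb. eauto.
      - symmetry. apply le_antisym.
        + apply inf_glb. intros y [a' [H1' [H2' E']]]. rewrite E'.
          apply mu_mono; auto.
        + rewrite H3. apply inf_lb. eauto. }
  assert (Hu : o_is_lub O (fun x => exists a0, olt a0 l /\ x = B a0) (oliminf phi l))
    by apply osup_spec.
  set (u := oliminf phi l) in *.
  destruct Hu as [Hub Hleast].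
  apply le_antisym.
  2:{ apply sup_least. intros x [a0 [Ha0 E]]. rewrite E. apply mu_mono; auto.
      apply Hub. eauto. }
  destruct (classic (exists a0, olt a0 l /\ B a0 = u)) as [[a0 [Ha0 E]]|Hna].
  { rewrite <- E. apply sup_ub. eauto. }
  assert (Hlt : forall a0, olt a0 l -> olt (B a0) u).
  { intros a0 Ha0. destruct (Hub (B a0) (ex_intro _ a0 (conj Ha0 eq_refl))) as [H|H]; auto.
    exfalso; apply Hna; eauto. }
  destruct (classify O u) as [[p Hp]|[[Hnp Hex]|Hz]].
  - exfalso.
    assert (Hpu : ole u p).
    { apply Hleast. intros x [a0 [Ha0 E]]. rewrite E.
      destruct (ole_or_lt _ (B a0) p) as [H|H]; auto.
      exfalso. apply (proj2 Hp (B a0)). split; auto. }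
    apply (olt_irrefl _ p). destruct Hpu as [H|H].
    + eapply olt_trans; [exact (proj1 Hp)|exact H].
    + rewrite H in Hp. exact (proj1 Hp).
  - rewrite (mu_lim O L f u Hm Hnp Hex).
    apply sup_least. intros y [c [Hc E]]. rewrite E.
    destruct (classic (exists a0, olt a0 l /\ olt c (B a0))) as [[a0 [Ha0 Hca]]|Hn].
    + eapply le_trans; [apply mu_mono; [exact Hm|left; exact Hca]|].
      apply sup_ub. eauto.
    + exfalso.
      assert (Huc : ole u c).
      { apply Hleast. intros x [a0 [Ha0 E']]. rewrite E'.
        destruct (ole_or_lt _ (B a0) c) as [H|H]; auto.
        exfalso; apply Hn; eauto. }
      apply (olt_irrefl _ c). destruct Huc as [H|H].
      * eapply olt_trans; eauto.
      * rewrite H in Hc; exact Hc.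
  - exfalso. apply (Hz (B a00)). apply Hlt; auto.
Qed.

Theorem lemma4p17 (O : OrdSet) (K L : CompleteLattice)
  (F : O -> K -> L -> L)
  (Fmono : forall (a : O) (G : K), monotone (F a G))
  (Fpull : liminf_pullable (K := prodCL K L) (K' := L)
             (fun (a : O) (GX : prodCL K L) => F a (fst GX) (snd GX))) :
  (forall beta : O,
      liminf_pullable (K := K) (K' := L) (fun (a : O) (G : K) => mu beta (F a G)))
  /\
  (forall (f : L -> L), monotone f ->
   forall (phi : O -> O) (l : O), is_limit l ->
     mu (oliminf phi l) f = liminf (fun a : O => mu (phi a) f) l).
Proof.
  split.
  - apply part1; auto.
  - intros f Hf. apply part2; auto.
Qed.
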